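(* Let $H$ be a graph and $k\ge2$, and suppose $G=\mathsf{TJ}_k(H)$ is triangle-free. Then any two distinct nonadjacent vertices of $G$ have at most two common neighbors.
   Context: All graphs are finite, simple, undirected. A $k$-clique of a graph $H$ is a set of $k$ pairwise adjacent vertices. For a graph $H$ and integer $k\ge1$, the Token Jumping graph $\mathsf{TJ}_k(H)$ has as vertices the $k$-cliques of $H$, and two $k$-cliques $A,B$ are adjacent iff $|A\cap B|=k-1$. *)

(* Defs.v *)
From mathcomp Require Import all_boot.
Set Implicit Arguments. Unset Strict Implicit. Unset Printing Implicit Defensive.

Definition simple_graph (T : finType) (e : rel T) : Prop :=
  symmetric e /\ irreflexive e.

Definition is_kclique (T : finType) (e : rel T) (k : nat) (A : {set T}) : bool :=
  (#|A| == k) && [forall x in A, forall y in A, (x != y) ==> e x y].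

Definition tj_adj (T : finType) (e : rel T) (k : nat) (A B : {set T}) : bool :=
  [&& is_kclique e k A, is_kclique e k B & #|A :&: B| == k.-1].

Definition tj_triangle_free (T : finType) (e : rel T) (k : nat) : Prop :=
  forall A B C : {set T}, ~ [&& tj_adj e k A B, tj_adj e k B C & tj_adj e k A C].

Definition tj_common_nbrs (T : finType) (e : rel T) (k : nat) (A B : {set T})
  : {set {set T}} :=
  [set C : {set T} | tj_adj e k A C && tj_adj e k B C].

(* Main.v *)
Require Import Defs.
From mathcomp Require Import all_boot.
From mathcomp Require Import zify.

Lemma kcl_card {T : finType} {e : rel T} {k A} : is_kclique e k A -> #|A| = k.
Proof. by case/andP=> /eqP. Qed.

Lemma inter_bound {T : finType} {X Y C : {set T}} :
  X \subset C -> Y \subset C -> #|X| + #|Y| <= #|C| + #|X :&: Y|.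
Proof.
move=> hX hY; rewrite -cardsUI leq_add2r; apply: subset_leq_card.
by rewrite subUset hX hY.
Qed.

Theorem lemma4p6 (T : finType) (e : rel T) (k : nat) :
  simple_graph e -> 2 <= k -> tj_triangle_free e k ->
  forall A B : {set T},
    is_kclique e k A -> is_kclique e k B -> A != B -> ~~ tj_adj e k A B ->
    #|tj_common_nbrs e k A B| <= 2.
Proof.
move=> _ k2 tf A B cA cB AB nAB.
have hA := kcl_card cA; have hB := kcl_card cB.
set S := tj_common_nbrs e k A B.
have memS C : C \in S -> [/\ is_kclique e k C, #|A :&: C| = k.-1 & #|B :&: C| = k.-1].
  by rewrite inE => /andP[/and3P[_ cC /eqP h1] /and3P[_ _ /eqP h2]].
have hAB : #|A :&: B| <= k - 2.
  have le1 : #|A :&: B| <= k by rewrite -hA subset_leq_card // subsetIl.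
  have ne1 : #|A :&: B| != k.-1.
    by apply: contra nAB => h; rewrite /tj_adj cA cB h.
  have ne2 : #|A :&: B| != k.
    apply: contra AB => /eqP h.
    have e1 : A :&: B = A by apply/eqP; rewrite eqEcard subsetIl h hA leqnn.
    have e2 : A :&: B = B by apply/eqP; rewrite eqEcard subsetIr h hB leqnn.
    by rewrite -e1 e2.
  lia.
have sub C : C \in S -> A :&: B \subset C.
  case/memS=> cC h1 h2; have hC := kcl_card cC.
  have := inter_bound (subsetIr A C) (subsetIr B C).
  rewrite h1 h2 hC => hb.
  have eI : A :&: C :&: (B :&: C) = A :&: B :&: C by rewrite setIACA setIid.
  rewrite eI in hb.
  have h3 : #|A :&: B :&: C| <= #|A :&: B| by rewrite subset_leq_card // subsetIl.
  have : A :&: B :&: C == A :&: B by rewrite eqEcard subsetIl /=; lia.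
  by move=> /eqP <-; rewrite subsetIr.
case: (boolP (S == set0)) => [/eqP -> | ]; first by rewrite cards0.
case/set0Pn=> C0 C0S.
have lb : k - 2 <= #|A :&: B|.
  have [cC h1 h2] := memS _ C0S; have hC := kcl_card cC.
  have := inter_bound (subsetIr A C0) (subsetIr B C0).
  rewrite h1 h2 hC => hb.
  have : #|A :&: C0 :&: (B :&: C0)| <= #|A :&: B|.
    by apply: subset_leq_card; rewrite setIACA setIid subsetIl.
  lia.
have inj : {in S &, injective (fun C => C :&: A)}.
  move=> C D CS DS /= eCD; apply/eqP; apply/negPn/negP => nCD.
  have [cC h1 _] := memS _ CS; have [cD h1' _] := memS _ DS.
  have hC := kcl_card cC; have hD := kcl_card cD.
  have s1 : C :&: A \subset C :&: D.
    apply/subsetP=> x xCA; rewrite inE (subsetP (subsetIl C A)) //=.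
    by move: xCA; rewrite eCD inE => /andP[].
  have l1 : k.-1 <= #|C :&: D|.
    by rewrite -h1 setIC; apply: subset_leq_card.
  have l2 : #|C :&: D| != k.
    apply: contra nCD => /eqP h.
    have e1 : C :&: D = C by apply/eqP; rewrite eqEcard subsetIl h hC leqnn.
    have e2 : C :&: D = D by apply/eqP; rewrite eqEcard subsetIr h hD leqnn.
    by rewrite -e1 e2.
  have l3 : #|C :&: D| <= k by rewrite -hC subset_leq_card // subsetIl.
  apply: (tf A C D); rewrite /tj_adj cA cC cD h1 h1' /=.
  have -> : #|C :&: D| = k.-1 by lia.
  by rewrite !eqxx.
have img : (fun C => C :&: A) @: S \subset [set A :\ x | x in A :\: B].
  apply/subsetP => _ /imsetP[C CS ->].
  have [cC h1 _] := memS _ CS.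
  have : A :&: C != A.
    by apply/eqP => h; move: h1; rewrite h hA; lia.
  rewrite eqEsubset subsetIl /= => /subsetPn[x xA xAC].
  have xnC : x \notin C by move: xAC; rewrite inE xA.
  apply/imsetP; exists x.
    rewrite inE xA andbT; apply: contra xnC => xB.
    by apply: (subsetP (sub C CS)); rewrite inE xA xB.
  apply/eqP; rewrite eqEcard; apply/andP; split.
    apply/subsetP => y; rewrite !inE => /andP[yC yA]; rewrite yA andbT.
    by apply: contra xnC => /eqP <-.
  rewrite setIC h1 -hA (cardsD1 x A) xA; lia.
have h5 := leq_imset_card (fun x => A :\ x) (A :\: B).
have h4 := subset_leq_card img.
rewrite (card_in_imset inj) in h4.
have h6 : #|A :\: B| = k - #|A :&: B| by rewrite cardsD hA.
lia.
Qed.
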